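(* Let $\alpha>0$, $\tau=\beta/\alpha\in[0,1)$, $D_0\in\mathbb{R}$, and $p^a_1,p^a_2,p^d_1,p^d_2\in\mathbb{R}$. Let $$X=\frac12\begin{pmatrix}0&0&-1&0\\0&0&0&-1\\-1&\tau&0&\tau\\\tau&-1&\tau&0\end{pmatrix},\qquad Y=\begin{pmatrix}\frac{D_0-(\alpha-\beta)p^d_1}{2(\alpha-\beta)}\\[2pt]\frac{D_0-(\alpha-\beta)p^d_2}{2(\alpha-\beta)}\\[2pt]\frac{D_0-\alpha(p^a_1-p^d_1)}{2\alpha}\\[2pt]\frac{D_0-\alpha(p^a_2-p^d_2)}{2\alpha}\end{pmatrix}.$$ Then $I-X$ is invertible. Moreover, for every initial vector $p_0\in\mathbb{R}^4$, the sequence defined by $p_{t+1}=Xp_t+Y$ converges to $(I-X)^{-1}Y$.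
   Context: The vector $p_t=(p^s_{1t},p^s_{2t},p^c_{1t},p^c_{2t})$ represents the prices set on day $t$ in the two-CP ex ante regulated model. The iteration is the simultaneous best-response update in which each player sets its price using the unconstrained linear demands $d_i=D_0-\alpha p_i+\beta p_j$. *)

(* Defs.v *)
From HB Require Import structures.
From mathcomp Require Import all_boot all_order all_algebra.
From mathcomp Require Import all_classical all_reals all_analysis.
Set Implicit Arguments. Unset Strict Implicit. Unset Printing Implicit Defensive.
Import Order.TTheory GRing.Theory Num.Theory.
Local Open Scope ring_scope.

Definition Xmat (R : realType) (tau : R) : 'M[R]_4 :=
  \matrix_(i < 4, j < 4)
    (2^-1 * (match nat_of_ord i, nat_of_ord j with
     | 0, 2 => -1
     | 1, 3 => -1
     | 2, 0 => -1
     | 2, 1 => tau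
     | 2, 3 => tau
     | 3, 0 => tau
     | 3, 1 => -1
     | 3, 2 => tau
     | _, _ => 0
     end)).

Definition Yvec (R : realType) (alpha tau D0 pa1 pa2 pd1 pd2 : R) : 'cV[R]_4 :=
  let beta := tau * alpha in
  \col_(i < 4)
    (match nat_of_ord i with
     | 0 => (D0 - (alpha - beta) * pd1) / (2 * (alpha - beta))
     | 1 => (D0 - (alpha - beta) * pd2) / (2 * (alpha - beta))
     | 2 => (D0 - alpha * (pa1 - pd1)) / (2 * alpha)
     | _ => (D0 - alpha * (pa2 - pd2)) / (2 * alpha)
     end).

Fixpoint iter_seq (R : realType) (X : 'M[R]_4) (Y p0 : 'cV[R]_4) (t : nat)
  : 'cV[R]_4 :=
  match t with
  | 0 => p0
  | t'.+1 => X *m iter_seq X Y p0 t' + Y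
  end.

(* Main.v *)
Require Import Defs.
From HB Require Import structures.
From mathcomp Require Import all_boot all_order all_algebra.
From mathcomp Require Import all_classical all_reals all_analysis.
From mathcomp Require Import ring lra.
Import Order.TTheory GRing.Theory Num.Theory.
Import numFieldNormedType.Exports.
Local Open Scope classical_set_scope.
Local Open Scope ring_scope.
Definition c {R : realType} (v : 'cV[R]_4) (k : nat) := v (inord k) 0.
Lemma cE (R : realType) (v : 'cV[R]_4) (j : 'I_4) : v j 0 = c v j.
Proof. by rewrite /c inord_val. Qed.
Lemma Xv (R : realType) tau (v : 'cV[R]_4) (i : 'I_4) : (Xmat tau *m v) i 0 = 
  match nat_of_ord i with 0 => - c v 2 / 2 | 1 => - c v 3 / 2 | 2 => (- c v 0 + tau * c v 1 + tau * c v 3)/2 | _ => (tau * c v 0 - c v 1 + tau * c v 2) / 2 end.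
Proof.
rewrite mxE !big_ord_recl big_ord0 !mxE !cE /=.
case: i => [[|[|[|[|k]]]] Hi] //=; rewrite /bump /=; by field; rewrite ?pnatr_eq0.
Qed.

Definition V {R : realType} (v : 'cV[R]_4) := `|c v 0| + `|c v 1| + `|c v 2| + `|c v 3|.

Lemma cXv (R : realType) tau (v : 'cV[R]_4) (k : nat) : (k < 4)%N ->
  c (Xmat tau *m v) k =
  match k with 0 => - c v 2 / 2 | 1 => - c v 3 / 2 | 2 => (- c v 0 + tau * c v 1 + tau * c v 3)/2 | _ => (tau * c v 0 - c v 1 + tau * c v 2) / 2 end.
Proof. by move=> hk; rewrite /c Xv inordK. Qed.

Lemma V_ge0 (R : realType) (v : 'cV[R]_4) : 0 <= V v.
Proof. by rewrite /V !addr_ge0. Qed.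

Lemma norm3 (R : realType) (x y z : R) : `|x + y + z| <= `|x| + `|y| + `|z|.
Proof. by rewrite (le_trans (ler_normD _ _)) // lerD2r ler_normD. Qed.

Lemma VX (R : realType) tau (v : 'cV[R]_4) : 0 <= tau ->
  V (Xmat tau *m v) <= (1 + tau) / 2 * V v.
Proof.
move=> ht; rewrite /V !cXv //.
set a0 := c v 0; set a1 := c v 1; set a2 := c v 2; set a3 := c v 3.
have h2 : forall x : R, `|x / 2| = `|x| / 2.
  by move=> x; rewrite normrM (ger0_norm (x := 2^-1)) // invr_ge0.
have ht1 : forall x : R, `|tau * x| = tau * `|x|.
  by move=> x; rewrite normrM ger0_norm.
rewrite !h2 !normrN.
have e1 := @norm3 R (- a0) (tau * a1) (tau * a3).
have e2 := @norm3 R (tau * a0) (- a1) (tau * a2).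
rewrite !ht1 !normrN in e1 e2.
have n0 := normr_ge0 a0; have n1 := normr_ge0 a1; have n2 := normr_ge0 a2; have n3 := normr_ge0 a3.
nra.
Qed.

Lemma norm_le_V (R : realType) (v : 'cV[R]_4) : `|v| <= V v.
Proof.
change (mx_norm v <= V v); rewrite mx_normrE; apply: bigmax_le; first exact: V_ge0.
move=> [i j] _ /=; rewrite (ord1 j) cE /V.
have n0 := normr_ge0 (c v 0); have n1 := normr_ge0 (c v 1); have n2 := normr_ge0 (c v 2); have n3 := normr_ge0 (c v 3).
case: i => [[|[|[|[|k]]]] Hi] //=; lra.
Qed.

Lemma V_eq0 (R : realType) (v : 'cV[R]_4) : V v <= 0 -> v = 0.
Proof.
rewrite /V => h.
have n0 := normr_ge0 (c v 0); have n1 := normr_ge0 (c v 1); have n2 := normr_ge0 (c v 2); have n3 := normr_ge0 (c v 3).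
apply/matrixP => i j; rewrite (ord1 j) cE mxE.
apply/eqP; rewrite -normr_eq0 eq_le normr_ge0 andbT.
case: i => [[|[|[|[|k]]]] Hi] //=; lra.
Qed.

Arguments VX {R}. Arguments norm_le_V {R}. Arguments V_eq0 {R}. Arguments V_ge0 {R}.

Theorem theorem9 (R : realType) (alpha tau D0 pa1 pa2 pd1 pd2 : R) :
  0 < alpha -> 0 <= tau -> tau < 1 ->
  let X := Xmat tau in
  let Y := Yvec alpha tau D0 pa1 pa2 pd1 pd2 in
  (1%:M - X) \in unitmx /\
  (forall p0 : 'cV[R]_4,
     iter_seq X Y p0 t @[t --> \oo] --> invmx (1%:M - X) *m Y).
Proof.
move=> ha ht0 ht1 X Y.
have fix_eq : forall w : 'cV[R]_4, (1%:M - X) *m w = 0 -> w = 0.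
  move=> w hw; apply: V_eq0.
  have ew : w = X *m w by apply/eqP; rewrite -subr_eq0 -{1}(mul1mx w) -mulmxBl hw.
  have := VX tau w ht0; rewrite -/X -ew => h.
  have := V_ge0 w; nra.
have hu : (1%:M - X) \in unitmx.
  rewrite -unitmx_tr -row_free_unit -kermx_eq0; apply/eqP/row_matrixP => i.
  rewrite row0; set u := row i _.
  have : (u *m (1%:M - X)^T = 0) by apply/sub_kermxP; exact: row_sub.
  move=> h.
  have : (1%:M - X) *m u^T = 0 by rewrite -(trmxK ((1%:M - X) *m u^T)) trmx_mul trmxK h trmx0.
  by move/fix_eq => h2; rewrite -(trmxK u) h2 trmx0.
split => // p0.
set ps := invmx (1%:M - X) *m Y.
have hps : X *m ps + Y = ps.
  have : (1%:M - X) *m ps = Y by rewrite /ps mulmxA mulmxV // mul1mx.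
  by rewrite mulmxBl mul1mx => <-; rewrite addrCA subrr addr0.
set e := fun t => iter_seq X Y p0 t - ps.
have he : forall t, e t.+1 = X *m e t.
  by move=> t; rewrite /e /= -{1}hps mulmxBr opprD addrACA subrr addr0.
set k := (1 + tau) / 2.
have hk0 : 0 <= k by rewrite /k divr_ge0 // addr_ge0.
have hV : forall t, V (e t) <= k ^+ t * V (e 0%N).
  elim=> [|t IH]; first by rewrite expr0 mul1r.
  rewrite he exprS -mulrA (le_trans (VX _ _ ht0)) // ler_wpM2l //.
have hlim : (fun t => k ^+ t * V (e 0%N)) @ \oo --> (0 : R).
  rewrite -(mul0r (V (e 0%N))); apply: cvgMr_tmp; apply: cvg_expr.
  rewrite ger0_norm // /k; lra.
apply/subr_cvg0/norm_cvg0P.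
apply: (@squeeze_cvgr _ _ _ _ (fun _ => 0) _ _ _ 0 (cvg_cst _) hlim).
near=> t.
rewrite normr_ge0 /= (le_trans (norm_le_V _)) //; exact: hV.
Unshelve. all: by end_near.
Qed.
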